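(* Let $N\ge 3$ be an integer and $a>0$ real. Let $H=H^{(N)}(a)$ be the real $N\times N$ tridiagonal matrix with $H_{nn}=a+2n-1$, $H_{n,n+1}=-n$, $H_{n+1,n}=-(a+n)$, all other entries zero, and write $D_n(a)=\prod_{j=1}^{n-1}(a+j)$. Then there exists a real symmetric pentadiagonal $N\times N$ matrix $\mathcal P_2=\mathcal P_2^{(N)}(a)$ with $H^\dagger\mathcal P_2=\mathcal P_2H$ whose entries are $(\mathcal P_2)_{11}=(\mathcal P_2)_{12}=0$, $(\mathcal P_2)_{13}=1$, $$(\mathcal P_2)_{nn}=\frac{(n-1)\,(n-1)!\,(a+3n-4)}{D_n(a)}\quad(n=2,\dots,N-1),$$ $$(\mathcal P_2)_{n,n+1}=-\frac{2(n-1)\,n!}{D_n(a)}\quad(n=2,\dots,N-1),\qquad (\mathcal P_2)_{n,n+2}=\frac{(n+1)!}{2D_n(a)}\quad(n=2,\dots,N-2),$$ (the remaining entry $(\mathcal P_2)_{NN}$ being some real number depending on $N$ and $a$). Consequently, with $\Theta_0$ and $\mathcal P_1$ as in the context, for all real $\alpha,\beta$ the pentadiagonal matrix $\Theta_2=\Theta_0+\alpha\mathcal P_1+\beta\mathcal P_2$ satisfies $H^\dagger\Theta_2=\Theta_2H$, and it is a positive definite metric for $H$ whenever $|\alpha|,|\beta|$ are sufficiently small.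
   Context: $H^\dagger$ is the conjugate transpose. A metric for $H$ is a positive definite Hermitian matrix $\Theta$ with $H^\dagger\Theta=\Theta H$. $\Theta_0$ is the diagonal matrix with $(\Theta_0)_{nn}=(n-1)!/D_n(a)$; $\mathcal P_1$ is the real symmetric tridiagonal matrix with $(\mathcal P_1)_{11}=0$, $(\mathcal P_1)_{nn}=-2(n-1)(n-1)!/D_n(a)$ for $n\ge2$, and $(\mathcal P_1)_{n,n+1}=(\mathcal P_1)_{n+1,n}=n!/D_n(a)$; both satisfy $H^\dagger X=XH$. Symmetric entries are understood: $(\mathcal P_2)_{ji}=(\mathcal P_2)_{ij}$. *)

(* Defs.v *)
From HB Require Import structures.
From mathcomp Require Import all_boot all_order all_algebra.
From mathcomp Require Import reals.
Set Implicit Arguments. Unset Strict Implicit. Unset Printing Implicit Defensive.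
Import Order.TTheory GRing.Theory Num.Theory.
Local Open Scope ring_scope.

(* Indices: the matrix index i : 'I_N corresponds to the paper's n = i+1. *)

Definition Dn {R : realType} (a : R) (n : nat) : R :=
  \prod_(1 <= j < n) (a + j%:R).

Definition Hmat {R : realType} (N : nat) (a : R) : 'M[R]_N :=
  \matrix_(i < N, j < N)
    (if (j : nat) == i then a + (2 * i.+1)%:R - 1
     else if (j : nat) == i.+1 then - (i.+1)%:R
     else if (i : nat) == j.+1 then - (a + (j.+1)%:R)
     else 0).

Definition Theta0 {R : realType} (N : nat) (a : R) : 'M[R]_N :=
  \matrix_(i < N, j < N)
    (if (j : nat) == i then (i`! )%:R / Dn a i.+1 else 0).

Definition P1mat {R : realType} (N : nat) (a : R) : 'M[R]_N :=
  \matrix_(i < N, j < N)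
    (if (j : nat) == i then
       (if (i : nat) == 0%N then 0 else - ((2 * i * i`! )%:R / Dn a i.+1))
     else if (j : nat) == i.+1 then (i.+1`! )%:R / Dn a i.+1
     else if (i : nat) == j.+1 then (j.+1`! )%:R / Dn a j.+1
     else 0).

Definition posdef {R : realType} (N : nat) (T : 'M[R]_N) : Prop :=
  T^T = T /\ forall x : 'cV[R]_N, x != 0 -> 0 < (x^T *m T *m x) 0 0.

(* Theta is a metric for H: positive definite Hermitian with H^dagger Theta = Theta H
   (H real, so H^dagger = H^T). *)
Definition is_metric {R : realType} (N : nat) (H T : 'M[R]_N) : Prop :=
  posdef T /\ H^T *m T = T *m H.

Definition pentadiagonal {R : realType} (N : nat) (P : 'M[R]_N) : Prop :=
  forall i j : 'I_N, (i + 2 < j)%N \/ (j + 2 < i)%N -> P i j = 0.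

(* Main.v *)
Require Import Defs.
From HB Require Import structures.
From mathcomp Require Import all_boot all_order all_algebra.
From mathcomp Require Import reals.
From mathcomp Require Import zify ring lra.
Import Order.TTheory GRing.Theory Num.Theory.
Set Implicit Arguments. Unset Strict Implicit. Unset Printing Implicit Defensive.
Local Open Scope ring_scope.

Definition hf (R : realType) (a : R) (i j : nat) : R :=
    (if j == i then a + (2 * i.+1)%:R - 1
     else if j == i.+1 then - (i.+1)%:R
     else if i == j.+1 then - (a + (j.+1)%:R)
     else 0).

Lemma hf_dd (R : realType) (a : R) i : hf a i i = a + (2 * i.+1)%:R - 1.
Proof. by rewrite /hf eqxx. Qed.
Lemma hf_up (R : realType) (a : R) i : hf a i i.+1 = - (i.+1)%:R.
Proof. by rewrite /hf eqxx (gtn_eqF (ltnSn i)). Qed.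
Lemma hf_lo (R : realType) (a : R) i : hf a i.+1 i = - (a + (i.+1)%:R).
Proof.
rewrite /hf eqxx.
have -> : (i == i.+1) = false by lia.
by have -> : (i == i.+2) = false by lia.
Qed.
Lemma hf_far (R : realType) (a : R) k l : (k.+1 < l)%N || (l.+1 < k)%N -> hf a k l = 0.
Proof.
move=> h; rewrite /hf.
have -> : (l == k) = false by lia.
have -> : (l == k.+1) = false by lia.
by have -> : (k == l.+1) = false by lia.
Qed.

Definition pf (R : realType) (N : nat) (dd ee ff : nat -> R) (xN : R) (i j : nat) : R :=
  if j == i then (if i == N.-1 then xN else dd i)
  else if j == i.+1 then ee i else if j == i.+2 then ff i else 0.

Definition pent (R : realType) (N : nat) (dd ee ff : nat -> R) (xN : R) (i j : nat) : R :=
  if (i < N)%N && (j < N)%N then (if (i <= j)%N then pf N dd ee ff xN i j else pf N dd ee ff xN j i)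
  else 0.

Lemma pent_sym (R : realType) N (dd ee ff : nat -> R) xN i j :
  pent N dd ee ff xN i j = pent N dd ee ff xN j i.
Proof.
rewrite /pent andbC.
case: (_ && _) => //.
by case: (ltngtP i j) => // ->.
Qed.

Lemma pent_out (R : realType) N (dd ee ff : nat -> R) xN i j :
  (N <= i)%N || (N <= j)%N -> pent N dd ee ff xN i j = 0.
Proof.
move=> h; rewrite /pent.
by have -> : ((i < N)%N && (j < N)%N) = false by lia.
Qed.

Lemma pent_far (R : realType) N (dd ee ff : nat -> R) xN i j :
  (i.+2 < j)%N || (j.+2 < i)%N -> pent N dd ee ff xN i j = 0.
Proof.
move=> h; rewrite /pent /pf.
case: (_ && _) => //.
case: ifP => hij.
  have -> : (j == i) = false by lia.
  have -> : (j == i.+1) = false by lia.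
  by have -> : (j == i.+2) = false by lia.
have -> : (i == j) = false by lia.
have -> : (i == j.+1) = false by lia.
by have -> : (i == j.+2) = false by lia.
Qed.

Lemma pent_dd (R : realType) N (dd ee ff : nat -> R) xN i :
  (i.+1 < N)%N -> pent N dd ee ff xN i i = dd i.
Proof.
move=> h; rewrite /pent /pf leqnn eqxx.
have -> : ((i < N)%N && (i < N)%N) = true by lia.
by have -> : (i == N.-1) = false by lia.
Qed.

Lemma pent_last (R : realType) N (dd ee ff : nat -> R) xN i :
  i.+1 = N -> pent N dd ee ff xN i i = xN.
Proof.
move=> h; rewrite /pent /pf leqnn eqxx.
have -> : ((i < N)%N && (i < N)%N) = true by lia.
by have -> : (i == N.-1) = true by lia.
Qed.

Lemma pent_up1 (R : realType) N (dd ee ff : nat -> R) xN i :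
  (i.+1 < N)%N -> pent N dd ee ff xN i i.+1 = ee i.
Proof.
move=> h; rewrite /pent /pf leqnSn eqxx.
have -> : ((i < N)%N && (i.+1 < N)%N) = true by lia.
by have -> : (i.+1 == i) = false by lia.
Qed.

Lemma pent_lo1 (R : realType) N (dd ee ff : nat -> R) xN i :
  (i.+1 < N)%N -> pent N dd ee ff xN i.+1 i = ee i.
Proof. by move=> h; rewrite pent_sym pent_up1. Qed.

Lemma pent_up2 (R : realType) N (dd ee ff : nat -> R) xN i :
  (i.+2 < N)%N -> pent N dd ee ff xN i i.+2 = ff i.
Proof.
move=> h; rewrite /pent /pf eqxx.
have -> : ((i < N)%N && (i.+2 < N)%N) = true by lia.
have -> : (i <= i.+2)%N = true by lia.
have -> : (i.+2 == i) = false by lia.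
by have -> : (i.+2 == i.+1) = false by lia.
Qed.

Lemma pent_lo2 (R : realType) N (dd ee ff : nat -> R) xN i :
  (i.+2 < N)%N -> pent N dd ee ff xN i.+2 i = ff i.
Proof. by move=> h; rewrite pent_sym pent_up2. Qed.

Definition Lx (R : realType) (a : R) (p : nat -> nat -> R) (i j : nat) : R :=
  (if (0 < i)%N then hf a i.-1 i * p i.-1 j else 0) + hf a i i * p i j + hf a i.+1 i * p i.+1 j.
Definition Rx (R : realType) (a : R) (p : nat -> nat -> R) (i j : nat) : R :=
  (if (0 < j)%N then p i j.-1 * hf a j.-1 j else 0) + p i j * hf a j j + p i j.+1 * hf a j.+1 j.

Lemma LR_sym (R : realType) (a : R) p i j : (forall i j, p i j = p j i) ->
  Lx a p j i = Rx a p i j.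
Proof.
move=> hs; rewrite /Lx /Rx.
by rewrite !(hs _ i) (mulrC (hf a j.-1 j)) (mulrC (hf a j j)) (mulrC (hf a j.+1 j)).
Qed.
Lemma sum_band (R : realType) (f : nat -> R) (N i : nat) : (i < N)%N ->
  (forall k, (k.+1 < i)%N || (i.+1 < k)%N -> f k = 0) -> f N = 0 ->
  \sum_(k < N) f k = (if (0 < i)%N then f i.-1 else 0) + f i + f i.+1.
Proof.
move=> iN hf fN.
have key : forall M, (i.+2 <= M)%N -> \sum_(0 <= k < M) f k =
   (if (0 < i)%N then f i.-1 else 0) + f i + f i.+1.
  move=> M hM.
  rewrite (big_cat_nat (n := i.+2)) //=.
  rewrite [X in _ + X]big1_seq ?addr0; last first.
    move=> k /andP[_]; rewrite mem_iota => /andP[h1 h2]; apply: hf; lia.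
  case: i iN hf fN hM => [|m] iN hf fN hM.
    by rewrite big_nat_recr //= big_nat_recr //= big_geq // add0r.
  rewrite big_nat_recr //= big_nat_recr //= big_nat_recr //=.
  rewrite big1_seq ?add0r //.
  move=> k /andP[_]; rewrite mem_iota => /andP[h1 h2]; apply: hf; lia.
rewrite -(big_mkord xpredT f).
case: (ltnP i.+1 N) => h.
  by apply: key.
have -> : N = i.+1 by lia.
have := key i.+2 (leqnn _).
rewrite big_nat_recr //= => <-.
have -> : i.+1 = N by lia.
by rewrite fN addr0.
Qed.

Lemma comm_gen (R : realType) (N : nat) (a : R) (P : 'M[R]_N) (p : nat -> nat -> R) :
  (forall i j : 'I_N, P i j = p i j) ->
  (forall i j, (N <= i)%N -> p i j = 0) -> (forall i j, (N <= j)%N -> p i j = 0) ->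
  (forall i j, (i < N)%N -> (j < N)%N -> Lx a p i j = Rx a p i j) ->
  (Hmat N a)^T *m P = P *m Hmat N a.
Proof.
move=> hP h1 h2 hLR; apply/matrixP => i j; rewrite !mxE.
transitivity (\sum_(k < N) (fun k : nat => hf a k i * p k j) k).
  by apply: eq_bigr => k _; rewrite !mxE hP.
transitivity (\sum_(k < N) (fun k : nat => p i k * hf a k j) k).
  rewrite (sum_band (f := fun k => hf a k i * p k j) (i := i)) //; last 2 first.
  - by move=> k hk; rewrite hf_far // mul0r.
  - by rewrite h1 // mulr0.
  rewrite (sum_band (f := fun k => p i k * hf a k j) (i := j)) //; last 2 first.
  - by move=> k hk; rewrite hf_far // mulr0.
  - by rewrite h2 // mul0r.
  by have := hLR i j (ltn_ord i) (ltn_ord j); rewrite /Lx /Rx.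
by apply: eq_bigr => k _; rewrite !mxE hP.
Qed.

Lemma core (R : realType) (N : nat) (a : R) (dd ee ff : nat -> R) (xN : R) :
  (forall i, (i.+3 < N)%N -> hf a i.+1 i * ff i.+1 = ff i * hf a i.+2 i.+3) ->
  (forall i, (i.+2 < N)%N -> hf a i i * ff i + hf a i.+1 i * ee i.+1
                             = ee i * hf a i.+1 i.+2 + ff i * hf a i.+2 i.+2) ->
  (forall i, (i.+2 < N)%N ->
     (if (0 < i)%N then hf a i.-1 i * ff i.-1 else 0) + hf a i i * ee i + hf a i.+1 i * dd i.+1
     = dd i * hf a i i.+1 + ee i * hf a i.+1 i.+1 + ff i * hf a i.+2 i.+1) ->
  (forall i, i.+2 = N ->
     (if (0 < i)%N then hf a i.-1 i * ff i.-1 else 0) + hf a i i * ee i + hf a i.+1 i * xN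
     = dd i * hf a i i.+1 + ee i * hf a i.+1 i.+1) ->
  forall i j, (i < N)%N -> (j < N)%N ->
    Lx a (pent N dd ee ff xN) i j = Rx a (pent N dd ee ff xN) i j.
Proof.
move=> hA hB hC hD.
set p := pent N dd ee ff xN.
have ps : forall i j, p i j = p j i by move=> i j; rewrite /p pent_sym.
have main : forall i j, (i <= j)%N -> (i < N)%N -> (j < N)%N -> Lx a p i j = Rx a p i j.
  move=> i j hij hi hj.
  have [d ej] : exists d, j = (i + d)%N by exists (j - i)%N; lia.
  subst j.
  clear hij; case: d hj => [|[|[|[|d]]]] hj; rewrite ?addn0 in hj *.
  - rewrite /Lx /Rx; case: ifP => _; last rewrite !add0r.
      by rewrite !(ps i) (mulrC (hf a i.-1 i)) (mulrC (hf a i i)) (mulrC (hf a i.+1 i)).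
    by rewrite !(ps i) (mulrC (hf a i i)) (mulrC (hf a i.+1 i)).
  - rewrite addn1 in hj *; rewrite /Lx /Rx /= /p.
    have e1 : (if (0 < i)%N then hf a i.-1 i * pent N dd ee ff xN i.-1 i.+1 else 0)
            = (if (0 < i)%N then hf a i.-1 i * ff i.-1 else 0).
      case: i hi hj => [|m] hi hj //=; rewrite pent_up2 //; lia.
    rewrite e1 pent_up1 // (@pent_dd R N dd ee ff xN i); last lia.
    case: (ltnP i.+2 N) => h2.
      by rewrite pent_dd // pent_up2 // hC.
    have h3 : i.+2 = N by lia.
    rewrite pent_last // (@pent_out R N dd ee ff xN i i.+2) ?mul0r ?addr0 ?hD //; lia.
  - rewrite addn2 in hj *; rewrite /Lx /Rx /= /p.
    rewrite pent_up2 // (@pent_up1 R N dd ee ff xN i); last lia.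
    rewrite (@pent_far R N dd ee ff xN i i.+3) ?mul0r ?addr0; last lia.
    have -> : (if (0 < i)%N then hf a i.-1 i * pent N dd ee ff xN i.-1 i.+2 else 0) = 0.
      by case: ifP => h //; rewrite pent_far ?mulr0 //; lia.
    by rewrite add0r (@pent_up1 R N dd ee ff xN i.+1) // hB.
  - rewrite addn3 in hj *; rewrite /Lx /Rx /= /p.
    rewrite pent_up2; last lia.
    rewrite (@pent_far R N dd ee ff xN i i.+3) ?mul0r ?mulr0 ?addr0; last lia.
    rewrite (@pent_far R N dd ee ff xN i i.+4) ?mul0r ?mulr0 ?addr0; last lia.
    have -> : (if (0 < i)%N then hf a i.-1 i * pent N dd ee ff xN i.-1 i.+3 else 0) = 0.
      by case: ifP => h //; rewrite pent_far ?mulr0 //; lia.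
    rewrite (@pent_up2 R N dd ee ff xN i); last lia.
    by rewrite add0r hA.
  - rewrite /Lx /Rx /p.
    have -> : (0 < i + d.+4)%N = true by lia.
    rewrite !(@pent_far R N dd ee ff xN i); try lia.
    rewrite (@pent_far R N dd ee ff xN i.+1); last lia.
    have -> : (if (0 < i)%N then hf a i.-1 i * pent N dd ee ff xN i.-1 (i + d.+4) else 0) = 0.
      by case: ifP => h //; rewrite pent_far ?mulr0 //; lia.
    by rewrite !mulr0 !mul0r !addr0.
move=> i j hi hj; case: (leqP i j) => h; first exact: main.
have s1 := @LR_sym R a p j i ps; have s2 := @LR_sym R a p i j ps.
by rewrite s1 -s2 main // ltnW.
Qed.
Lemma Dn1 (R : realType) (a : R) : Dn a 1 = 1.
Proof. by rewrite /Dn big_geq. Qed.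

Lemma DnS (R : realType) (a : R) k : Dn a k.+2 = Dn a k.+1 * (a + k.+1%:R).
Proof. by rewrite /Dn big_nat_recr. Qed.

Lemma Dn_gt0 (R : realType) (a : R) k : 0 < a -> 0 < Dn a k.
Proof.
move=> ha; rewrite /Dn; apply: prodr_gt0 => j _.
by apply: ltr_pwDl ha _; rewrite ler0n.
Qed.

Ltac nz := repeat (apply/andP; split); apply: lt0r_neq0;
  first [by apply: Dn_gt0 | lra].

Definition qd (R : realType) (a : R) (k : nat) : R := (k`!)%:R / Dn a k.+1.

Lemma apos (R : realType) (a : R) k : 0 < a -> a + k%:R != 0.
Proof. by move=> ha; apply: lt0r_neq0; apply: ltr_pwDl ha _; rewrite ler0n. Qed.

Lemma qdS (R : realType) (a : R) k : 0 < a ->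
  qd a k.+1 = k.+1%:R / (a + k.+1%:R) * qd a k.
Proof.
move=> ha; rewrite /qd DnS factS natrM.
have ht : 0 <= k%:R :> R by rewrite ler0n.
field; nz.
Qed.

Definition dd1 (R : realType) (a : R) (i : nat) : R :=
  if (i : nat) == 0%N then 0 else - ((2 * i * i`! )%:R / Dn a i.+1).
Definition ee1 (R : realType) (a : R) (i : nat) : R := (i.+1`! )%:R / Dn a i.+1.
Definition dd2 (R : realType) (a : R) (i : nat) : R :=
  ((i.+1 - 1) * (i.+1 - 1)`! )%:R * (a + (3 * i.+1 - 4)%:R) / Dn a i.+1.
Definition ee2 (R : realType) (a : R) (i : nat) : R :=
  - ((2 * (i.+1 - 1) * i.+1`! )%:R / Dn a i.+1).
Definition ff2 (R : realType) (a : R) (i : nat) : R :=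
  ((i.+1.+1)`! )%:R / (2 * Dn a i.+1).
Definition x2 (R : realType) (N : nat) (a : R) : R :=
  let i := N.-2 in
  ((i.+1)%:R * dd2 a i - 2 * ee2 a i - i%:R * ff2 a i.-1) / (a + (i.+1)%:R).
Definition zf (R : realType) (i : nat) : R := 0.

Lemma dd1q (R : realType) (a : R) i : dd1 a i = - (2 * i%:R) * qd a i.
Proof.
rewrite /dd1 /qd; case: eqP => [->|_]; first by rewrite mulr0 oppr0 mul0r.
rewrite !natrM; ring.
Qed.

Lemma ee1q (R : realType) (a : R) i : ee1 a i = i.+1%:R * qd a i.
Proof. by rewrite /ee1 /qd factS natrM mulrA. Qed.

Lemma dd2q (R : realType) (a : R) i : dd2 a i = i%:R * (a + 3 * i%:R - 1) * qd a i.
Proof.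
rewrite /dd2 /qd subSS subn0; case: i => [|m]; first by rewrite !mul0n !mul0r.
have -> : (3 * m.+2 - 4)%N = (3 * m + 2)%N by lia.
rewrite !natrM natrD -!natr1; ring.
Qed.

Lemma ee2q (R : realType) (a : R) i : ee2 a i = - (2 * i%:R * i.+1%:R) * qd a i.
Proof. rewrite /ee2 /qd subSS subn0 factS !natrM; ring. Qed.

Lemma ff2q (R : realType) (a : R) i : ff2 a i = i.+1%:R * i.+2%:R / 2 * qd a i.
Proof.
rewrite /ff2 /qd !factS !natrM invfM; ring.
Qed.

Ltac alg := rewrite ?hf_lo ?hf_up ?hf_dd ?dd1q ?ee1q ?dd2q ?ee2q ?ff2q ?qdS //; field; nz.

Lemma th_C (R : realType) (a : R) i : 0 < a ->
  (if (0 < i)%N then hf a i.-1 i * zf R i.-1 else 0) + hf a i i * zf R i + hf a i.+1 i * qd a i.+1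
  = qd a i * hf a i i.+1 + zf R i * hf a i.+1 i.+1 + zf R i * hf a i.+2 i.+1.
Proof.
move=> ha; rewrite /zf !mulr0 !mul0r; have ht : 0 <= i%:R :> R by rewrite ler0n.
case: ifP => _; alg.
Qed.

Lemma p1_B (R : realType) (a : R) i : 0 < a ->
  hf a i i * zf R i + hf a i.+1 i * ee1 a i.+1 = ee1 a i * hf a i.+1 i.+2 + zf R i * hf a i.+2 i.+2.
Proof.
move=> ha; rewrite /zf !mulr0 !mul0r; have ht : 0 <= i%:R :> R by rewrite ler0n.
alg.
Qed.

Lemma p1_C (R : realType) (a : R) i : 0 < a ->
  (if (0 < i)%N then hf a i.-1 i * zf R i.-1 else 0) + hf a i i * ee1 a i + hf a i.+1 i * dd1 a i.+1
  = dd1 a i * hf a i i.+1 + ee1 a i * hf a i.+1 i.+1 + zf R i * hf a i.+2 i.+1.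
Proof.
move=> ha; rewrite /zf !mulr0 !mul0r; have ht : 0 <= i%:R :> R by rewrite ler0n.
case: ifP => _; alg.
Qed.

Lemma p2_A (R : realType) (a : R) i : 0 < a ->
  hf a i.+1 i * ff2 a i.+1 = ff2 a i * hf a i.+2 i.+3.
Proof. move=> ha; have ht : 0 <= i%:R :> R by rewrite ler0n. alg. Qed.

Lemma p2_B (R : realType) (a : R) i : 0 < a ->
  hf a i i * ff2 a i + hf a i.+1 i * ee2 a i.+1 = ee2 a i * hf a i.+1 i.+2 + ff2 a i * hf a i.+2 i.+2.
Proof. move=> ha; have ht : 0 <= i%:R :> R by rewrite ler0n. alg. Qed.

Lemma p2_C (R : realType) (a : R) i : 0 < a ->
  (if (0 < i)%N then hf a i.-1 i * ff2 a i.-1 else 0) + hf a i i * ee2 a i + hf a i.+1 i * dd2 a i.+1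
  = dd2 a i * hf a i i.+1 + ee2 a i * hf a i.+1 i.+1 + ff2 a i * hf a i.+2 i.+1.
Proof.
move=> ha; case: i => [|m] /=.
  rewrite add0r; alg.
have ht : 0 <= m%:R :> R by rewrite ler0n.
alg.
Qed.

Lemma p2_D (R : realType) (N : nat) (a : R) i : 0 < a -> (0 < i)%N -> i.+2 = N ->
  (if (0 < i)%N then hf a i.-1 i * ff2 a i.-1 else 0) + hf a i i * ee2 a i + hf a i.+1 i * x2 N a
  = dd2 a i * hf a i i.+1 + ee2 a i * hf a i.+1 i.+1.
Proof.
move=> ha hi hN; rewrite hi /x2 -hN /=.
case: i hi hN => [|m] // _ _ /=.
have ht : 0 <= m%:R :> R by rewrite ler0n.
rewrite hf_lo hf_up hf_dd hf_up hf_dd.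
field; nz.
Qed.

Lemma pent_nf (R : realType) N (dd ee ff : nat -> R) xN (i j : nat) : (i < N)%N -> (j < N)%N ->
  pent N dd ee ff xN i j =
  if j == i then (if i == N.-1 then xN else dd i) else if j == i.+1 then ee i
  else if i == j.+1 then ee j else if j == i.+2 then ff i else if i == j.+2 then ff j else 0.
Proof.
move=> hi hj; rewrite /pent /pf hi hj /=.
case: (leqP i j) => h.
  have -> : (i == j.+1) = false by lia.
  by have -> : (i == j.+2) = false by lia.
have -> : (j == i) = false by lia.
have -> : (j == i.+1) = false by lia.
have -> : (j == i.+2) = false by lia.
by have -> : (i == j) = false by lia.
Qed.

Lemma th0_pent (R : realType) N (a : R) (i j : 'I_N) :
  Theta0 N a i j = pent N (qd a) (@zf R) (@zf R) (qd a N.-1) i j.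
Proof.
rewrite pent_nf // mxE; have [/val_inj e|ne] := eqVneq (j:nat) (i:nat).
  by subst j; case: eqP => [<-|].
by rewrite /zf; repeat case: ifP.
Qed.

Lemma p1_pent (R : realType) N (a : R) (i j : 'I_N) :
  P1mat N a i j = pent N (dd1 a) (ee1 a) (@zf R) (dd1 a N.-1) i j.
Proof.
rewrite pent_nf // mxE; have [/val_inj e|ne] := eqVneq (j:nat) (i:nat).
  by subst j; case: (@eqP _ (i:nat) N.-1) => [<-|].
by rewrite /zf /ee1; repeat case: ifP.
Qed.

Lemma outL (R : realType) N (dd ee ff : nat -> R) xN :
  (forall i j, (N <= i)%N -> pent N dd ee ff xN i j = 0).
Proof. by move=> i j h; apply: pent_out; rewrite h. Qed.
Lemma outR (R : realType) N (dd ee ff : nat -> R) xN :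
  (forall i j, (N <= j)%N -> pent N dd ee ff xN i j = 0).
Proof. by move=> i j h; apply: pent_out; rewrite h orbT. Qed.

Lemma comm_th0 (R : realType) N (a : R) : 0 < a ->
  (Hmat N a)^T *m Theta0 N a = Theta0 N a *m Hmat N a.
Proof.
move=> ha; apply: (comm_gen (p := pent N (qd a) (@zf R) (@zf R) (qd a N.-1))).
- exact: th0_pent.
- exact: outL.
- exact: outR.
apply: core.
- by move=> i _; rewrite /zf mulr0 mul0r.
- by move=> i _; rewrite /zf !mulr0 !mul0r.
- by move=> i _; apply: th_C.
- move=> i hN; rewrite -hN /=; have := @th_C R a i ha.
  by rewrite /zf !mul0r addr0.
Qed.

Lemma comm_p1 (R : realType) N (a : R) : 0 < a ->
  (Hmat N a)^T *m P1mat N a = P1mat N a *m Hmat N a.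
Proof.
move=> ha; apply: (comm_gen (p := pent N (dd1 a) (ee1 a) (@zf R) (dd1 a N.-1))).
- exact: p1_pent.
- exact: outL.
- exact: outR.
apply: core.
- by move=> i _; rewrite /zf mulr0 mul0r.
- by move=> i _; apply: p1_B.
- by move=> i _; apply: p1_C.
- move=> i hN; rewrite -hN /=; have := @p1_C R a i ha.
  by rewrite /zf !mul0r addr0.
Qed.

Lemma comm_p2 (R : realType) N (a : R) : 0 < a -> (3 <= N)%N ->
  (Hmat N a)^T *m (\matrix_(i < N, j < N) pent N (dd2 a) (ee2 a) (ff2 a) (x2 N a) i j)
  = (\matrix_(i < N, j < N) pent N (dd2 a) (ee2 a) (ff2 a) (x2 N a) i j) *m Hmat N a.
Proof.
move=> ha hN; apply: (comm_gen (p := pent N (dd2 a) (ee2 a) (ff2 a) (x2 N a))).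
- by move=> i j; rewrite mxE.
- exact: outL.
- exact: outR.
apply: core.
- by move=> i _; apply: p2_A.
- by move=> i _; apply: p2_B.
- by move=> i _; apply: p2_C.
- move=> i hi; apply: p2_D => //; lia.
Qed.
Definition quad (R : realType) N (T : 'M[R]_N) (x : 'cV[R]_N) : R :=
  \sum_i \sum_j x i 0 * T i j * x j 0.

Lemma quadE (R : realType) N (T : 'M[R]_N) (x : 'cV[R]_N) :
  (x^T *m T *m x) 0 0 = quad T x.
Proof.
rewrite mxE /quad.
under eq_bigr do rewrite mxE mulr_suml.
rewrite exchange_big; apply: eq_bigr => i _; apply: eq_bigr => j _.
by rewrite !mxE.
Qed.

Lemma quad_lin (R : realType) N (A B C : 'M[R]_N) (al be : R) (x : 'cV[R]_N) :
  quad (A + al *: B + be *: C) x = quad A x + al * quad B x + be * quad C x.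
Proof.
rewrite /quad !mulr_sumr -!big_split; apply: eq_bigr => i _.
rewrite !mulr_sumr -!big_split; apply: eq_bigr => j _.
rewrite !mxE /=; ring.
Qed.

Lemma sq_le_sum (R : realType) N (x : 'cV[R]_N) k :
  x k 0 ^+ 2 <= \sum_i x i 0 ^+ 2.
Proof.
rewrite (bigD1 k) //= lerDl; apply: sumr_ge0 => i _; exact: sqr_ge0.
Qed.

Lemma quad_bound (R : realType) N (P : 'M[R]_N) (x : 'cV[R]_N) :
  `|quad P x| <= (\sum_i \sum_j `|P i j|) * \sum_i x i 0 ^+ 2.
Proof.
set s := \sum_i x i 0 ^+ 2.
rewrite /quad mulr_suml; apply: le_trans (ler_norm_sum _ _ _) _.
apply: ler_sum => i _; rewrite mulr_suml.
apply: le_trans (ler_norm_sum _ _ _) _.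
apply: ler_sum => j _.
have hi := sq_le_sum x i; have hj := sq_le_sum x j.
rewrite -/s in hi hj.
rewrite !normrM (mulrC `|x i 0|) -mulrA ler_wpM2l //.
have ui : `|x i 0| ^+ 2 <= s by rewrite real_normK ?num_real.
have uj : `|x j 0| ^+ 2 <= s by rewrite real_normK ?num_real.
have := normr_ge0 (x i 0); have := normr_ge0 (x j 0).
move: ui uj; set u := `|x i 0|; set v := `|x j 0| => ui uj hu hv.
nra.
Qed.

Lemma posdef_pert (R : realType) N (T0 A B : 'M[R]_N) (th : 'I_N -> R) :
  (forall i j : 'I_N, T0 i j = if (j : nat) == i then th i else 0) -> (forall i, 0 < th i) ->
  exists2 eps : R, 0 < eps & forall (al be : R) (x : 'cV[R]_N), `|al| < eps -> `|be| < eps ->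
    x != 0 -> 0 < (x^T *m (T0 + al *: A + be *: B) *m x) 0 0.
Proof.
move=> hT hth.
set S := \sum_k (th k)^-1.
have S0 : 0 <= S by apply: sumr_ge0 => k _; rewrite invr_ge0 ltW.
set m := (1 + S)^-1.
have m0 : 0 < m by rewrite invr_gt0; lra.
have mS : m * (1 + S) = 1 by rewrite mulVf //; apply: lt0r_neq0; lra.
have mle : forall i, m <= th i.
  move=> i; have thS : 1 <= th i * S.
    have : (th i)^-1 <= S by rewrite /S (bigD1 i) //= lerDl sumr_ge0 // => k _; rewrite invr_ge0 ltW.
    move=> h; have := ler_wpM2l (ltW (hth i)) h; rewrite mulfV //; exact: lt0r_neq0.
  have := hth i; nra.
set C1 := \sum_i \sum_j `|A i j|; set C2 := \sum_i \sum_j `|B i j|.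
have C10 : 0 <= C1 by apply: sumr_ge0 => i _; apply: sumr_ge0 => j _.
have C20 : 0 <= C2 by apply: sumr_ge0 => i _; apply: sumr_ge0 => j _.
exists (m / (2 * (1 + C1 + C2))).
  by apply: divr_gt0 => //; lra.
move=> al be x hal hbe hx.
have epsE : m / (2 * (1 + C1 + C2)) * (2 * (1 + C1 + C2)) = m.
  by rewrite mulfVK //; apply: lt0r_neq0; lra.
move: hal hbe epsE; set eps := m / (2 * (1 + C1 + C2)) => hal hbe epsE.
set s := \sum_i x i 0 ^+ 2.
have [k hk] : exists k, x k 0 != 0.
  apply/existsP; move: hx; apply: contraR; rewrite negb_exists => /forallP h.
  apply/eqP/matrixP => i j; rewrite (ord1 j) mxE; exact/eqP/negbNE.
have s0 : 0 < s.
  by apply: lt_le_trans (sq_le_sum x k); rewrite lt_def sqrf_eq0 hk sqr_ge0.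
have Q0 : m * s <= quad T0 x.
  rewrite /quad /s mulr_sumr; apply: ler_sum => i _.
  rewrite (bigD1 i) //= big1 ?addr0; last first.
    by move=> j hj; rewrite hT; case: eqP => [/val_inj hji|]; [rewrite hji eqxx in hj | rewrite mulr0 mul0r].
  rewrite hT eqxx.
  have -> : x i 0 * th i * x i 0 = th i * x i 0 ^+ 2 by rewrite expr2; ring.
  by apply: ler_wpM2r (mle i); apply: sqr_ge0.
have b1 := quad_bound A x; have b2 := quad_bound B x.
rewrite -/C1 -/s in b1; rewrite -/C2 -/s in b2.
have h1 : - (`|al| * (C1 * s)) <= al * quad A x.
  have n1 : `|al * quad A x| <= `|al| * (C1 * s) by rewrite normrM ler_wpM2l.
  by move: n1; rewrite ler_norml => /andP[].
have h2 : - (`|be| * (C2 * s)) <= be * quad B x.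
  have n1 : `|be * quad B x| <= `|be| * (C2 * s) by rewrite normrM ler_wpM2l.
  by move: n1; rewrite ler_norml => /andP[].
have e1 : `|al| * (C1 * s) <= eps * (C1 * s) by apply: ler_wpM2r; [apply: mulr_ge0 => //; exact: ltW | exact: ltW].
have e2 : `|be| * (C2 * s) <= eps * (C2 * s) by apply: ler_wpM2r; [apply: mulr_ge0 => //; exact: ltW | exact: ltW].
rewrite quadE quad_lin.
have ep0 : 0 < eps by rewrite /eps; apply: divr_gt0 => //; lra.
have epsE' : 2 * eps + 2 * (eps * C1) + 2 * (eps * C2) = m by rewrite -epsE; ring.
have lt1 : eps * C1 + eps * C2 < m by lra.
have : (eps * C1 + eps * C2) * s < m * s by rewrite ltr_pM2r.
have -> : (eps * C1 + eps * C2) * s = eps * (C1 * s) + eps * (C2 * s) by ring.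
lra.
Qed.

Theorem lemma3 (R : realType) (N : nat) (a : R) (hN : (3 <= N)%N) (ha : 0 < a) :
  exists P2 : 'M[R]_N,
    [/\ P2^T = P2 /\ pentadiagonal P2,
        (Hmat N a)^T *m P2 = P2 *m Hmat N a,
        (forall i j : 'I_N,
           let n := i.+1 in
           [/\ ((i : nat) = 0%N -> (j : nat) = 0%N -> P2 i j = 0) /\
               ((i : nat) = 0%N -> (j : nat) = 1%N -> P2 i j = 0) /\
               ((i : nat) = 0%N -> (j : nat) = 2%N -> P2 i j = 1),
               ((2 <= n)%N -> (n <= N - 1)%N -> (j : nat) = i ->
                 P2 i j = ((n - 1) * (n - 1)`! )%:R * (a + (3 * n - 4)%:R) / Dn a n),
               ((2 <= n)%N -> (n <= N - 1)%N -> (j : nat) = i.+1 ->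
                 P2 i j = - ((2 * (n - 1) * n`! )%:R / Dn a n))
             & ((2 <= n)%N -> (n <= N - 2)%N -> (j : nat) = i.+2 ->
                 P2 i j = ((n.+1)`! )%:R / (2 * Dn a n))]),
        (forall alpha beta : R,
           let Theta2 := Theta0 N a + alpha *: P1mat N a + beta *: P2 in
           (Hmat N a)^T *m Theta2 = Theta2 *m Hmat N a)
      & exists2 eps : R, 0 < eps &
          forall alpha beta : R, `|alpha| < eps -> `|beta| < eps ->
            is_metric (Hmat N a) (Theta0 N a + alpha *: P1mat N a + beta *: P2)].
Proof.
set P2 := \matrix_(i < N, j < N) pent N (dd2 a) (ee2 a) (ff2 a) (x2 N a) i j.
have hP2 := @comm_p2 R N a ha hN.
have h0 := @comm_th0 R N a ha.
have h1 := @comm_p1 R N a ha.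
have sym2 : P2^T = P2 by apply/matrixP => i j; rewrite !mxE pent_sym.
have sym0 : (Theta0 N a)^T = Theta0 N a.
  by apply/matrixP => i j; rewrite mxE !th0_pent pent_sym.
have sym1 : (P1mat N a)^T = P1mat N a.
  by apply/matrixP => i j; rewrite mxE !p1_pent pent_sym.
have comm_all : forall al be : R,
    (Hmat N a)^T *m (Theta0 N a + al *: P1mat N a + be *: P2)
    = (Theta0 N a + al *: P1mat N a + be *: P2) *m Hmat N a.
  by move=> al be; rewrite !mulmxDr !mulmxDl -!scalemxAr -!scalemxAl h0 h1 hP2.
exists P2; split.
- split => // i j h; rewrite mxE pent_far //; lia.
- exact: hP2.
- move=> i j /=; split.
  + split; [|split].
    * by move=> hi hj; rewrite mxE hi hj pent_dd /dd2 ?subnn ?mul0n ?mul0r //; lia.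
    * by move=> hi hj; rewrite mxE hi hj pent_up1 /ee2 ?subnn ?muln0 ?mul0n ?mul0r ?oppr0 //; lia.
    * move=> hi hj; rewrite mxE hi hj pent_up2 /ff2 ?Dn1 /=; last lia.
      by rewrite mulr1 divff // pnatr_eq0.
  + by move=> h2 hn hj; rewrite mxE hj pent_dd //; lia.
  + by move=> h2 hn hj; rewrite mxE hj pent_up1 //; lia.
  + by move=> h2 hn hj; rewrite mxE hj pent_up2 //; lia.
- by move=> al be; apply: comm_all.
have [eps he hpos] := @posdef_pert R N (Theta0 N a) (P1mat N a) P2 (fun i => qd a i)
  (fun i j => ltac:(by rewrite mxE)) (fun i => ltac:(by apply: divr_gt0; [rewrite ltr0n fact_gt0 | apply: Dn_gt0])).
exists eps => // al be hal hbe; split; last exact: comm_all.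
split; last by move=> x hx; apply: hpos.
by rewrite !linearD !linearZ /= sym0 sym1 sym2.
Qed.
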